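(* Let $R$ be a principal ideal domain and let $a\in R$ be a nonzero non-unit. Then the left ideal $Ra$ is completely prime if and only if $a$ is c-irreducible.
   Context: A principal ideal domain (PID) is a (not necessarily commutative) domain in which every left ideal and every right ideal is principal. A left ideal $\mathfrak{p}$ is completely prime if $\mathfrak{p}\neq R$ and, for $a,b\in R$, $ab\in\mathfrak{p}$ and $\mathfrak{p}b\subseteq\mathfrak{p}$ imply $a\in\mathfrak{p}$ or $b\in\mathfrak{p}$. Elements $b,c$ are similar if $R/Rb\cong R/Rc$ as left $R$-modules. A nonzero $a$ is c-reducible if $a=bb'=c'c$ for some non-units $b,b',c',c\in R$ with $b$ similar to $c$; an element that is not c-reducible is c-irreducible. *)

(* Defs.v *)
From HB Require Import structures.
From mathcomp Require Import all_boot all_algebra.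
Set Implicit Arguments. Unset Strict Implicit. Unset Printing Implicit Defensive.
Import GRing.Theory.
Local Open Scope ring_scope.

Section Defs.
Variable R : nzRingType.

Definition is_unit (x : R) : Prop := exists y : R, x * y = 1 /\ y * x = 1.

(* domain: no zero divisors (nontriviality 1 <> 0 is part of nzRingType) *)
Definition is_domain : Prop := forall x y : R, x * y = 0 -> x = 0 \/ y = 0.

Definition is_left_ideal (I : R -> Prop) : Prop :=
  [/\ I 0, (forall x y, I x -> I y -> I (x + y)) & (forall r x, I x -> I (r * x))].
Definition is_right_ideal (I : R -> Prop) : Prop :=
  [/\ I 0, (forall x y, I x -> I y -> I (x + y)) & (forall r x, I x -> I (x * r))].

Definition lprinc (a : R) : R -> Prop := fun x => exists r, x = r * a.
Definition rprinc (a : R) : R -> Prop := fun x => exists r, x = a * r.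

Definition is_PID : Prop :=
  [/\ is_domain,
      (forall I, is_left_ideal I -> exists a, forall x, I x <-> lprinc a x) &
      (forall I, is_right_ideal I -> exists a, forall x, I x <-> rprinc a x)].

Definition completely_prime (p : R -> Prop) : Prop :=
  (exists x, ~ p x) /\
  forall a b : R, p (a * b) -> (forall x, p x -> p (x * b)) -> p a \/ p b.

(* b and c are similar: R/Rb ~= R/Rc as left R-modules.  An isomorphism of
   the quotient modules is given by a lift f : R -> R which is well defined,
   additive and R-linear modulo Rc, injective and surjective on classes. *)
Definition similar (b c : R) : Prop :=
  exists f : R -> R,
    [/\ (forall x y, lprinc b (x - y) -> lprinc c (f x - f y)),
        (forall x y, lprinc c (f (x + y) - (f x + f y))),
        (forall r x, lprinc c (f (r * x) - r * f x)),
        (forall x, lprinc c (f x) -> lprinc b x) &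
        (forall y, exists x, lprinc c (f x - y))].

Definition c_reducible (a : R) : Prop :=
  a <> 0 /\
  exists b b' c' c : R,
    [/\ ~ is_unit b, ~ is_unit b', ~ is_unit c' & ~ is_unit c] /\
    [/\ a = b * b', a = c' * c & similar b c].

Definition c_irreducible (a : R) : Prop := ~ c_reducible a.

End Defs.

(* Main.v *)
Require Import Defs.
From mathcomp Require Import all_boot all_algebra.
From Stdlib Require Import Classical.
Local Open Scope ring_scope.
Import GRing.Theory.

Section Aux.
Variable R : nzRingType.

Lemma cancelr (hD : is_domain R) (x z y : R) : y <> 0 -> x * y = z * y -> x = z.
Proof.
move=> y0 e; have : (x - z) * y = 0 by rewrite mulrBl e subrr.
case/hD => [/eqP|//]; by rewrite subr_eq0 => /eqP.
Qed.

Lemma lunit (hD : is_domain R) (x r : R) : r * x = 1 -> is_unit x.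
Proof.
move=> e; exists r; split => //.
have x0 : x <> 0.
  by move=> x0; move: e; rewrite x0 mulr0 => /eqP; rewrite eq_sym oner_eq0.
apply: (@cancelr hD _ _ x x0); by rewrite -mulrA e mulr1 mul1r.
Qed.

Variable a : R.

Lemma lp_add x y : lprinc a x -> lprinc a y -> lprinc a (x + y).
Proof. by move=> [r ->] [s ->]; exists (r + s); rewrite mulrDl. Qed.

Lemma lp_opp x : lprinc a x -> lprinc a (- x).
Proof. by move=> [r ->]; exists (- r); rewrite mulNr. Qed.

Lemma lp_lmul r x : lprinc a x -> lprinc a (r * x).
Proof. by move=> [s ->]; exists (r * s); rewrite mulrA. Qed.

Lemma lp_rmul q t x : a * q = t * a -> lprinc a x -> lprinc a (x * q).
Proof. by move=> e [s ->]; exists (s * t); rewrite -mulrA e mulrA. Qed.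

Lemma lp_pow q t n : a * q = t * a -> lprinc a (a * q ^+ n).
Proof.
move=> e; elim: n => [|n [s es]]; first by exists 1; rewrite expr0 mulr1 mul1r.
by exists (s * t); rewrite exprSr mulrA es -mulrA e mulrA.
Qed.

Lemma lp_rpow q t n x : a * q = t * a -> lprinc a x -> lprinc a (x * q ^+ n).
Proof. move=> e [s ->]; rewrite -mulrA; apply: lp_lmul; exact: lp_pow e. Qed.

End Aux.
Lemma zz (R : zmodType) (X Y Z: R) : X - Y - (Y - (Y+Y)) - (X - Z) = Z.
Proof. have -> : Y - (Y + Y) = - Y by rewrite opprD addrA subrr add0r.
by rewrite opprK subrK opprB addrC subrK. Qed.

Section Fwd.
Variable R : nzRingType.
Hypothesis hD : is_domain R.

Lemma fwd (a : R) : a <> 0 -> completely_prime (lprinc a) -> c_irreducible a.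
Proof.
move=> a0 [_ cp] [_ [b [b' [c' [c [[nb nb' nc' nc] [eb ec [f [f1 f2 f3 f4 f5]]]]]]]]].
have b'0 : b' <> 0 by move=> h; apply: a0; rewrite eb h mulr0.
have c0 : c <> 0 by move=> h; apply: a0; rewrite ec h mulr0.
have c'0 : c' <> 0 by move=> h; apply: a0; rewrite ec h mul0r.
have [x0 [r2 hx0]] := f5 1.
have hA : lprinc b (a * x0).
  apply: f4. have [r1 h1] := f3 a x0.
  exists (r1 + a * r2 + c').
  by rewrite !mulrDl -h1 -mulrA -hx0 -ec mulrBr mulr1 addrA !subrK.
have hB : lprinc b (c * x0).
  apply: f4. have [r1 h1] := f3 c x0.
  exists (r1 + c * r2 + 1).
  by rewrite !mulrDl -h1 -mulrA -hx0 mul1r mulrBr mulr1 addrA !subrK.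
have := cp c (x0 * b').
case.
- by case: hB => s es; exists s; rewrite mulrA es -mulrA -eb.
- case: hA => s es x [r ->]; exists (r * s).
  by rewrite -!mulrA (mulrA a) es -mulrA -eb mulrA.
- case=> r e; apply: nc'.
  have e1 : (r * c') * c = 1 * c by rewrite -mulrA -ec mul1r.
  exact: (@lunit R hD c' r (@cancelr R hD _ _ c c0 e1)).
- case=> r e.
  have e1 : x0 = r * b by apply: (@cancelr R hD _ _ b' b'0); rewrite e -mulrA -eb.
  have [t ht] := f1 x0 0 (ltac:(by exists r; rewrite subr0)).
  have [s hs] := f2 0 0.
  apply: nc; apply: (@lunit R hD c (t - s - r2)).
  by rewrite !mulrBl -ht -hs -hx0 addr0 zz.
Qed.
End Fwd.
Section Bwd.
Variable R : nzRingType.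
Hypothesis hP : is_PID R.

Lemma noeth (a q p u0 t : R) : a * q = t * a -> lprinc a (u0 * q - 1) ->
  lprinc a (p * q) -> lprinc a p.
Proof.
move=> e hu hpq.
have hn : forall n, lprinc a (u0 ^+ n * q ^+ n - 1).
  elim=> [|n IH]; first by exists 0; rewrite !expr0 mulr1 subrr mul0r.
  have -> : u0 ^+ n.+1 * q ^+ n.+1 - 1 =
            u0 ^+ n * (u0 * q - 1) * q ^+ n + (u0 ^+ n * q ^+ n - 1).
    by rewrite exprSr exprS mulrBr mulrBl mulr1 !mulrA addrA subrK.
  apply: lp_add => //; apply: (@lp_rpow _ a q t _ _ e); exact: lp_lmul.
pose U := fun x => exists n, lprinc a (x * q ^+ n).
have UI : is_left_ideal U.
  split.
  - by exists 0%N; exists 0; rewrite !mul0r.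
  - move=> x y [n hx] [m hy]; exists (n + m)%N.
    rewrite mulrDl; apply: lp_add.
    + by rewrite exprD mulrA; apply: (@lp_rpow _ a q t _ _ e).
    + by rewrite addnC exprD mulrA; apply: (@lp_rpow _ a q t _ _ e).
  - by move=> r x [n hx]; exists n; rewrite -mulrA; apply: lp_lmul.
case: hP => hD hL _.
have [g hg] := hL U UI.
have [N hN] : U g by apply/hg; exists 1; rewrite mul1r.
set x := p * u0 ^+ N.
have Ux : U x.
  exists N.+1.
  have -> : x * q ^+ N.+1 = p * (u0 ^+ N * q ^+ N - 1) * q + p * q.
    by rewrite /x mulrBr mulr1 mulrBl subrK !mulrA exprSr !mulrA.
  apply: lp_add => //; apply: (@lp_rmul _ a q t _ e); exact: lp_lmul.
have [r hr] := (proj1 (hg x)) Ux.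
have hxN : lprinc a (x * q ^+ N) by rewrite hr -mulrA; apply: lp_lmul.
have -> : p = x * q ^+ N - p * (u0 ^+ N * q ^+ N - 1).
  by rewrite /x mulrBr mulr1 opprB addrC -!mulrA subrK.
by apply: lp_add => //; apply: lp_opp; apply: lp_lmul.
Qed.
End Bwd.
Lemma bwd (R : nzRingType) (hP : is_PID R) (a : R) : a <> 0 -> ~ is_unit a ->
  c_irreducible a -> completely_prime (lprinc a).
Proof.
move=> a0 au ci; have hP' := hP; case: hP' => hD hL _; split.
  by exists 1 => -[r e]; apply: au; apply: (@lunit R hD a r); rewrite -e.
move=> p q hpq hq.
have [t ht] : lprinc a (a * q) by apply: hq; exists 1; rewrite mul1r.
case: (classic (lprinc a p)) => [h|np]; first by left.
case: (classic (lprinc a q)) => [h|nq]; first by right.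
exfalso; apply: ci; split => //.
pose K := fun x => lprinc a (x * q).
have KI : is_left_ideal K.
  split.
  - by exists 0; rewrite !mul0r.
  - by move=> x y hx hy; rewrite /K mulrDl; apply: lp_add.
  - by move=> r x hx; rewrite /K -mulrA; apply: lp_lmul.
have [c hc] := hL K KI.
have [c' ec] : lprinc c a by apply/hc; exists t.
pose J := fun x => exists y z, x = y * q + z * a.
have JI : is_left_ideal J.
  split.
  - by exists 0, 0; rewrite !mul0r addr0.
  - move=> x y [y1 [z1 ->]] [y2 [z2 ->]]; exists (y1 + y2), (z1 + z2).
    by rewrite !mulrDl addrACA.
  - move=> r x [y1 [z1 ->]]; exists (r * y1), (r * z1).
    by rewrite mulrDr !mulrA.
have [b' hb] := hL J JI.
have [b eb] : lprinc b' a by apply/hb; exists 0, 1; rewrite mul0r add0r mul1r.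
have [u [v ebu]] : J b' by apply/hb; exists 1; rewrite mul1r.
have [tq eq] : lprinc b' q by apply/hb; exists 1, 0; rewrite mul1r mul0r addr0.
have b'0 : b' <> 0 by move=> h; apply: a0; rewrite eb h mulr0.
have huq : u * q = b' - v * a by rewrite ebu addrK.
exists b, b', c', c; split; [split|split] => //.
- case=> y [h1 h2]; apply: nq; exists (tq * y).
  by rewrite eq eb -!mulrA (mulrA y) h2 mul1r.
- case=> e [h1 h2]; apply: np.
  apply: (@noeth R hP a q p (e * u) t ht) => //.
  exists (- (e * v)).
  by rewrite -mulrA huq mulrBr mulrA h2 mulNr addrC addKr.
- case=> y [h1 h2]; apply: np.
  have [r hr] : lprinc c p by apply/hc.
  by exists (r * y); rewrite hr -(mul1r c) -h2 -!mulrA -ec.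
- case=> y [h1 h2]; apply: nq.
  have : lprinc c 1 by exists y.
  by move/hc; rewrite /K mul1r.
- exists (fun x => x * u); split.
  + move=> x y [r e]; apply/hc; rewrite /K -mulrBl e.
    exists (r - r * b * v).
    by rewrite -!mulrA huq mulrBr -eb mulrBr mulrBl !mulrA.
  + by move=> x y; exists 0; rewrite mul0r mulrDl subrr.
  + by move=> r x; exists 0; rewrite mulrA subrr mul0r.
  + move=> x /hc [s es]; exists (s + x * v).
    apply: (@cancelr R hD _ _ b' b'0).
    by rewrite {1}ebu mulrDr mulrA es mulrA -mulrDl -!mulrA -eb.
  + move=> y; exists (y * tq); apply/hc; exists (- (y * tq * v)).
    rewrite mulrBl -!mulrA huq mulrBr -eq.
    by rewrite mulrBr addrAC subrr add0r mulNr !mulrA.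
Qed.

Theorem proposition3p5 (R : nzRingType) (hPID : is_PID R) (a : R)
  (ha0 : a <> 0) (hau : ~ is_unit a) :
  completely_prime (lprinc a) <-> c_irreducible a.
Proof.
split; first by apply: fwd; case: hPID.
exact: bwd.
Qed.
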